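(* Let $S\subseteq\mathbb{R}[\underline x]$. If $\operatorname{QM}(S)$ is archimedean in $\mathbb{R}[\underline x]$, then $\operatorname{qm}(S,\emptyset)$ is archimedean in $\mathscr{M}$ and $\operatorname{QM}(S,\emptyset)$ is archimedean in $\mathscr{M}[\underline x]$.
   Context: Let $\mathbb{R}[\underline x]=\mathbb{R}[x_1,\dots,x_n]$, $\mathscr{M}=\mathbb{R}[\mathtt{m}_{i_1,\dots,i_n}\colon (i_1,\dots,i_n)\in\mathbb{N}_0^n]$ the polynomial ring in countably many indeterminates with $\mathtt{m}_{0,\dots,0}:=1$, $\mathscr{M}[\underline x]=\mathscr{M}\otimes_{\mathbb{R}}\mathbb{R}[\underline x]$, and $\mathtt{m}:\mathscr{M}[\underline x]\to\mathscr{M}$ the unique $\mathscr{M}$-linear map with $\mathtt{m}(x_1^{i_1}\cdots x_n^{i_n})=\mathtt{m}_{i_1,\dots,i_n}$. A quadratic module in a commutative unital ring $A$ is a subset $M$ with $1\in M$, $M+M\subseteq M$, $a^2M\subseteq M$ for $a\in A$; it is archimedean if for every $a\in A$ there is $N\in\mathbb{N}$ with $N\pm a\in M$. $\operatorname{QM}(S)$ is the quadratic module of $\mathbb{R}[\underline x]$ generated by $S$; $\operatorname{qm}(S,\emptyset)$ is the quadratic module of $\mathscr{M}$ generated by $\{\mathtt{m}(f^2s)\colon s\in\{1\}\cup S,\ f\in\mathscr{M}[\underline x]\}$; $\operatorname{QM}(S,\emptyset)$ is the quadratic module of $\mathscr{M}[\underline x]$ generated by $S\cup\{\mathtt{m}(f^2s)\colon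 s\in\{1\}\cup S,\ f\in\mathscr{M}[\underline x]\}$. *)

(* Defs.v *)
From HB Require Import structures.
From mathcomp Require Import all_boot all_order all_algebra.
From mathcomp Require Import reals.
From mathcomp Require Import finmap monalg.

Set Implicit Arguments.
Unset Strict Implicit.
Unset Printing Implicit Defensive.

Import Order.TTheory GRing.Theory Num.Theory.
Local Open Scope ring_scope.

Definition is_qmodule (A : comPzRingType) (M : A -> Prop) : Prop :=
  [/\ M 1,
      (forall a b, M a -> M b -> M (a + b)) &
      (forall a b, M b -> M (a ^+ 2 * b))].

Definition qmod_gen (A : comPzRingType) (G : A -> Prop) : A -> Prop :=
  fun a => forall M : A -> Prop, is_qmodule M -> (forall g, G g -> M g) -> M a.

Definition qm_archimedean (A : comPzRingType) (M : A -> Prop) : Prop :=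
  forall a : A, exists N : nat, M (N%:R + a) /\ M (N%:R - a).

(* A monomial x_1^{i_1} ... x_n^{i_n} is an element of the commutative    *)
(* monomial type  cmonom 'I_n  (exponent vector (i_1,...,i_n)); the unit  *)
(* monomial 1%M corresponds to (0,...,0).                                 *)

Notation polyx R n := {malg R[cmonom 'I_n]}.

(* index set of the indeterminates m_{i_1,...,i_n} of \mathscr M:
   multi-indices different from (0,...,0) (since m_{0,...,0} := 1). *)
Definition midx (n : nat) := {a : cmonom 'I_n | a != @mone (cmonom 'I_n)}.

Notation Mring R n := {malg R[cmonom (midx n)]}.

(* \mathscr M[x] = \mathscr M \otimes_R R[x] = polynomials in x over \mathscr M *)
Notation Mpolyx R n := {malg (Mring R n)[cmonom 'I_n]}.

Section Moments.
Variables (R : realType) (n : nat).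

Definition mvar (a : cmonom 'I_n) : Mring R n :=
  match @insub _ (fun b : cmonom 'I_n => b != @mone (cmonom 'I_n)) (midx n) a with
  | Some b => << ucm b >>
  | None => 1
  end.

Definition mmap (p : Mpolyx R n) : Mring R n :=
  \sum_(k <- msupp p) p@_k * mvar k.

Definition emb_x (p : polyx R n) : Mpolyx R n :=
  \sum_(k <- msupp p) << (p@_k)%:MP *g k >>.

Definition emb_M (c : Mring R n) : Mpolyx R n := c%:MP.

Definition QM (S : polyx R n -> Prop) : polyx R n -> Prop := qmod_gen S.

Definition qm_generators (S : polyx R n -> Prop) : Mring R n -> Prop :=
  fun y => exists (s : polyx R n) (f : Mpolyx R n),
    (s = 1 \/ S s) /\ y = mmap (f ^+ 2 * emb_x s).

Definition qm_M (S : polyx R n -> Prop) : Mring R n -> Prop :=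
  qmod_gen (qm_generators S).

Definition QM_Mx (S : polyx R n -> Prop) : Mpolyx R n -> Prop :=
  qmod_gen (fun z : Mpolyx R n =>
    (exists s, S s /\ z = emb_x s) \/
    (exists y, qm_generators S y /\ z = emb_M y)).

End Moments.

(* Main.v *)
Require Import Defs.
From HB Require Import structures.
From mathcomp Require Import all_boot all_order all_algebra.
From mathcomp Require Import reals.
From mathcomp Require Import finmap monalg.
From mathcomp Require Import ring.
Import Order.TTheory GRing.Theory Num.Theory.
Local Open Scope ring_scope.
Set Implicit Arguments.
Unset Strict Implicit.

Section QGen.
Variables (A : comPzRingType) (G : A -> Prop).
Lemma qgen_qm : is_qmodule (qmod_gen G).
Proof.
split.
- by move=> M [H1 _ _] _.
- by move=> a b Ha Hb M HM HG; case: (HM) => _ HD _; apply: HD; [apply: Ha|apply: Hb].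
- by move=> a b Hb M HM HG; case: (HM) => _ _ HX; apply: HX; apply: Hb.
Qed.
Lemma qgen_gen g : G g -> qmod_gen G g.
Proof. by move=> Hg M _ HG; apply: HG. Qed.
Lemma qgen_min (M : A -> Prop) : is_qmodule M -> (forall g, G g -> M g) ->
  forall a, qmod_gen G a -> M a.
Proof. by move=> HM HG a Ha; apply: Ha. Qed.
End QGen.

Section Bounded.
Variables (R : realType) (A : comPzRingType) (phi : {rmorphism R -> A}).
Variables (M : A -> Prop) (HM : is_qmodule M).

Definition bnd (a : A) := exists N : nat, M (N%:R + a) /\ M (N%:R - a).

Lemma M1 : M 1. Proof. by case: HM. Qed.
Lemma MD a b : M a -> M b -> M (a + b). Proof. by case: HM => _ H _; apply: H. Qed.
Lemma MX a b : M b -> M (a ^+ 2 * b). Proof. by case: HM => _ _ H; apply: H. Qed.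
Lemma Msq a : M (a ^+ 2). Proof. by rewrite -[_ ^+ 2]mulr1; apply: MX; apply: M1. Qed.

Lemma Mpos (c : R) b : 0 <= c -> M b -> M (phi c * b).
Proof.
move=> c0 Mb; have -> : phi c = phi (Num.sqrt c) ^+ 2 by rewrite -rmorphXn sqr_sqrtr.
exact: MX.
Qed.

Lemma Mnat (k : nat) : M k%:R.
Proof.
elim: k => [|k IH].
  have -> : (0%:R : A) = 0 ^+ 2 by rewrite expr2 mulr0.
  exact: Msq.
by rewrite mulrS; apply: MD => //; apply: M1.
Qed.

Lemma Minv (k : nat) : exists x : A, (forall b, M b -> M (x * b)) /\ x * k.+1%:R = 1.
Proof.
exists (phi (k.+1%:R^-1)); split.
  by move=> b Mb; apply: Mpos => //; rewrite invr_ge0 ler0n.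
by rewrite -(rmorph_nat phi) -rmorphM mulVf ?rmorph1 // pnatr_eq0.
Qed.

Lemma bnd_phi (c : R) : bnd (phi c).
Proof.
have c0 : 0 <= `|c| by [].
set N := Num.Def.archi_bound `|c|.
have HN := archi_boundP c0.
exists N; split.
- have -> : N%:R + phi c = phi (N%:R + c) * 1 by rewrite mulr1 rmorphD rmorph_nat.
  apply: Mpos; last exact: M1.
  rewrite -lerBlDr sub0r; apply: le_trans (ltW HN); by rewrite -normrN ler_norm.
- have -> : N%:R - phi c = phi (N%:R - c) * 1 by rewrite mulr1 rmorphB rmorph_nat.
  apply: Mpos; last exact: M1.
  rewrite subr_ge0; apply: le_trans (ltW HN); exact: ler_norm.
Qed.

Lemma bnd_up a (N K : nat) : (N <= K)%N -> M (N%:R + a) -> M (K%:R + a).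
Proof.
move=> NK H; have -> : K%:R + a = (K - N)%N%:R + (N%:R + a).
  by rewrite addrA -natrD subnK.
by apply: MD => //; apply: Mnat.
Qed.

Lemma bnd_add a b : bnd a -> bnd b -> bnd (a + b).
Proof.
move=> [N [H1 H2]] [K [H3 H4]]; exists (N + K)%N; rewrite natrD; split.
  by have := MD H1 H3; congr M; ring.
by have := MD H2 H4; congr M; ring.
Qed.

Lemma bnd_opp a : bnd a -> bnd (- a).
Proof. by move=> [N [H1 H2]]; exists N; rewrite opprK; split. Qed.

Lemma bnd_sq a : bnd a -> bnd (a ^+ 2).
Proof.
move=> [N [H1 H2]].
have H1' : M (N.+1%:R + a) by apply: bnd_up H1.
have H2' : M (N.+1%:R - a) by apply: bnd_up H2.
set K := N.+1 in H1' H2'.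
have [x [Hx Hx1]] := Minv (K + N).
have e : (K + N).+1 = (K + K)%N by rewrite /K addnS.
rewrite e in Hx1; clearbody K.
exists (K * K)%N; split; first by apply: MD; [apply: Mnat|apply: Msq].
have -> : (K * K)%N%:R - a ^+ 2 = x * ((K%:R - a)^+2 * (K%:R + a) + (K%:R+a)^+2 * (K%:R - a)).
  transitivity (x * (K + K)%N%:R * ((K * K)%N%:R - a ^+ 2)); first by rewrite Hx1 mul1r.
  rewrite natrD natrM; ring.
by apply: Hx; apply: MD; apply: MX.
Qed.

Lemma bnd_mul a b : bnd a -> bnd b -> bnd (a * b).
Proof.
move=> Ha Hb.
have [Nu [Hu1 Hu2]] := bnd_sq (bnd_add Ha Hb).
have [Nw [Hw1 Hw2]] := bnd_sq (bnd_add Ha (bnd_opp Hb)).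
have [x [Hx Hx1]] := Minv 3.
exists (Nu + Nw)%N; split.
- have -> : (Nu + Nw)%N%:R + a * b = x * ((a + b)^+2 + (Nw%:R - (a - b)^+2) + (4 * Nu + 3 * Nw)%N%:R).
    transitivity (x * 4%:R * ((Nu + Nw)%N%:R + a * b)); first by rewrite Hx1 mul1r.
    rewrite !natrD ?natrM; ring.
  by apply: Hx; apply: MD; [apply: MD; [apply: Msq|]|apply: Mnat].
- have -> : (Nu + Nw)%N%:R - a * b = x * ((a - b)^+2 + (Nu%:R - (a + b)^+2) + (3 * Nu + 4 * Nw)%N%:R).
    transitivity (x * 4%:R * ((Nu + Nw)%N%:R - a * b)); first by rewrite Hx1 mul1r.
    rewrite !natrD ?natrM; ring.
  by apply: Hx; apply: MD; [apply: MD; [apply: Msq|]|apply: Mnat].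
Qed.

Lemma bnd_sum (I : Type) (r : seq I) (F : I -> A) :
  (forall i, bnd (F i)) -> bnd (\sum_(i <- r) F i).
Proof.
move=> HF; elim: r => [|i r IH]; first by rewrite big_nil -(rmorph0 phi); apply: bnd_phi.
by rewrite big_cons; apply: bnd_add.
Qed.

End Bounded.

Lemma malgU_C (K : monomType) (G : nzRingType) (c : G) (k : K) :
  (<< c *g k >> : {malg G[K]}) = c%:MP * << k >>.
Proof. apply/malgP => k'; by rewrite mcoeffCM !mcoeffU mulr_natr. Qed.

Lemma malgUM (K : monomType) (G : nzRingType) (k1 k2 : K) :
  (<< mmul k1 k2 >> : {malg G[K]}) = << k1 >> * << k2 >>.
Proof. by rewrite malgM_def fgmulUU mulr1. Qed.

Lemma bnd_nat (A : comPzRingType) (M : A -> Prop) (HM : is_qmodule M) (k : nat) :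
  bnd M k%:R.
Proof.
exists k; split; last first.
  rewrite subrr; have -> : (0 : A) = 0 ^+ 2 by rewrite expr2 mulr0.
  exact: Msq.
by rewrite -natrD; apply: Mnat.
Qed.
Lemma mcoeffU_gen (K : monomType) (G : nzRingType) (c : G) (k k' : K) :
  (<< c *g k >> : {malg G[K]})@_k' = c * (<< k >> : {malg G[K]})@_k'.
Proof. by rewrite !mcoeffU mulr_natr. Qed.

Lemma sq_assoc_gen (A : comPzRingType) (f g h : A) : f ^+ 2 * (g ^+ 2 * h) = (f * g) ^+ 2 * h.
Proof. by rewrite mulrA exprMn. Qed.

Section Conc.
Variables (R : realType) (n : nat).

Definition hX (k : cmonom 'I_n) : Mpolyx R n := << k >>.
Lemma hX_mm : mmorphism hX.
Proof. split; last by []. by move=> x y; rewrite /hX malgM_def fgmulUU mulr1. Qed.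
HB.instance Definition _ := isMultiplicative.Build _ _ hX hX_mm.

Definition fC : {rmorphism R -> Mpolyx R n} := malgC \o malgC.

Lemma fCE c : fC c = (c%:MP)%:MP.
Proof. by rewrite /fC /=. Qed.

Lemma emb_xE (p : polyx R n) : emb_x p = monalg.mmap fC hX p.
Proof.
rewrite /emb_x mmapE; apply: eq_bigr => k _.
rewrite /hX fCE mul_malgC.
apply/malgP => k'.
by rewrite mcoeffZ; apply: mcoeffU_gen.
Qed.

Lemma emb_xD (p q : polyx R n) : emb_x (p + q) = emb_x p + emb_x q.
Proof. by rewrite !emb_xE rmorphD. Qed.
Lemma emb_xM (p q : polyx R n) : emb_x (p * q) = emb_x p * emb_x q.
Proof. by rewrite !emb_xE rmorphM. Qed.
Lemma emb_xX2 (p : polyx R n) : emb_x (p ^+ 2) = emb_x p ^+ 2.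
Proof. by rewrite !emb_xE rmorphXn. Qed.
Lemma sq_assoc (f g h : Mpolyx R n) : f ^+ 2 * (g ^+ 2 * h) = (f * g) ^+ 2 * h.
Proof. exact: (sq_assoc_gen f g h). Qed.
Lemma emb_xB (p q : polyx R n) : emb_x (p - q) = emb_x p - emb_x q.
Proof. by rewrite !emb_xE rmorphB. Qed.
Lemma emb_x1 : emb_x (1 : polyx R n) = 1.
Proof. by rewrite !emb_xE rmorph1. Qed.
Lemma emb_x_nat k : emb_x (k%:R : polyx R n) = k%:R.
Proof. by rewrite !emb_xE rmorph_nat. Qed.
Lemma emb_xU (k : cmonom 'I_n) : emb_x (<< k >> : polyx R n) = << k >>.
Proof.
by rewrite /emb_x msuppU1 big_seq_fset1 mcoeffUU mpolyC1E.
Qed.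

Lemma mmapEw' (p : Mpolyx R n) (d : {fset cmonom 'I_n}) : (msupp p `<=` d)%fset ->
  Defs.mmap p = \sum_(k <- d) p@_k * mvar R k.
Proof.
move=> le; rewrite /Defs.mmap (big_fset_incl _ le) => //= x xd /mcoeff_outdom ->.
by rewrite mul0r.
Qed.

Lemma mmapD' (p q : Mpolyx R n) : Defs.mmap (p + q) = Defs.mmap p + Defs.mmap q.
Proof.
rewrite (@mmapEw' (p + q) (msupp p `|` msupp q)%fset) ?msuppD_le //.
rewrite (@mmapEw' p (msupp p `|` msupp q)%fset) ?fsubsetUl //.
rewrite (@mmapEw' q (msupp p `|` msupp q)%fset) ?fsubsetUr //.
rewrite -big_split /=; apply: eq_bigr => k _.
by rewrite mcoeffD mulrDl.
Qed.
Lemma mmapN' (p : Mpolyx R n) : Defs.mmap (- p) = - Defs.mmap p.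
Proof.
rewrite (@mmapEw' (- p) (msupp p)) ?msuppN //.
rewrite /Defs.mmap -sumrN; apply: eq_bigr => k _.
by rewrite mcoeffN mulNr.
Qed.
Lemma mmapB' (p q : Mpolyx R n) : Defs.mmap (p - q) = Defs.mmap p - Defs.mmap q.
Proof. by rewrite mmapD' mmapN'. Qed.
Lemma mvar1 : @mvar R n (@mone (cmonom 'I_n)) = 1.
Proof. by rewrite /mvar insubF //= eqxx. Qed.
Lemma mmapU' (c : Mring R n) (k : cmonom 'I_n) : Defs.mmap << c *g k >> = c * mvar R k.
Proof. by rewrite (@mmapEw' _ [fset k]%fset) ?msuppU_le // big_seq_fset1 mcoeffUU. Qed.
Lemma mmap_nat k : Defs.mmap (k%:R : Mpolyx R n) = k%:R.
Proof. by rewrite -mpolyC_nat mmapU' mvar1 mulr1. Qed.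
Lemma emb_MD (a b : Mring R n) : emb_M (a + b) = emb_M a + emb_M b.
Proof. exact: (raddfD (@malgC (cmonom 'I_n) (Mring R n)) a b). Qed.
Lemma emb_MB (a b : Mring R n) : emb_M (a - b) = emb_M a - emb_M b.
Proof. exact: (raddfB (@malgC (cmonom 'I_n) (Mring R n)) a b). Qed.
Lemma emb_MM (a b : Mring R n) : emb_M (a * b) = emb_M a * emb_M b.
Proof. exact: (rmorphM (@malgC (cmonom 'I_n) (Mring R n)) a b). Qed.
Lemma emb_MX2 (a : Mring R n) : emb_M (a ^+ 2) = emb_M a ^+ 2.
Proof. exact: (rmorphXn (@malgC (cmonom 'I_n) (Mring R n)) 2 a). Qed.
Lemma emb_M1 : emb_M (1 : Mring R n) = 1.
Proof. exact: (rmorph1 (@malgC (cmonom 'I_n) (Mring R n))). Qed.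
Lemma emb_Mnat k : emb_M (k%:R : Mring R n) = k%:R.
Proof. exact: (rmorph_nat (@malgC (cmonom 'I_n) (Mring R n)) k). Qed.
End Conc.
Lemma cm_ind (I : choiceType) (P : cmonom I -> Prop) :
  P (@mone (cmonom I)) -> (forall i m, P m -> P (mmul (ucm i) m)) -> forall m, P m.
Proof.
move=> P1 PS m; move: {2}(mdeg m) (erefl (mdeg m)) => d; elim: d m => [|d IH] m Hd.
  by rewrite (mdeg_eq0I Hd).
have [i Hi] : exists i, i \in finsupp m.
  case: (fset_0Vmem (finsupp m)) => [E|[x Hx]]; last by exists x.
  by move: Hd; rewrite mdegE E big_seq_fset0.
rewrite -cmE_neq0 in Hi.
pose m' := divcm m (ucm i).
have Em : m = mmul (ucm i) m'.
  apply/eqP/cmP => j; rewrite cmM divcmE ucmE.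
  by case: eqP => [<-|_]; [rewrite subnKC // lt0n|rewrite subn0].
rewrite Em; apply: PS; apply: IH.
by move: Hd; rewrite Em mdegM mdegU add1n => -[].
Qed.


Section Helpers.
Variables (R : realType) (n : nat) (S : polyx R n -> Prop).
Lemma qmMD (a b : Mring R n) : qm_M S a -> qm_M S b -> qm_M S (a + b).
Proof. move=> Ha Hb. exact: (MD (qgen_qm (qm_generators S)) Ha Hb). Qed.
Lemma qmMX (a b : Mring R n) : qm_M S b -> qm_M S (a ^+ 2 * b).
Proof. move=> Hb. exact: (MX (qgen_qm (qm_generators S)) a Hb). Qed.
Lemma qmxD (a b : Mpolyx R n) : QM_Mx S a -> QM_Mx S b -> QM_Mx S (a + b).
Proof. move=> Ha Hb. exact: (MD (qgen_qm _) Ha Hb). Qed.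
Lemma qmxX (a b : Mpolyx R n) : QM_Mx S b -> QM_Mx S (a ^+ 2 * b).
Proof. move=> Hb. exact: (MX (qgen_qm _) a Hb). Qed.
Lemma qmx1 : QM_Mx S 1.
Proof. exact: (M1 (qgen_qm _)). Qed.
End Helpers.

Lemma qm_intro_x (R : realType) (n : nat) (P : polyx R n -> Prop) : P 1 ->
  (forall a b : polyx R n, P a -> P b -> P (a + b)) ->
  (forall a b : polyx R n, P b -> P (a ^+ 2 * b)) -> is_qmodule P.
Proof. by move=> H1 H2 H3; split. Qed.
Lemma qm_intro_M (R : realType) (n : nat) (P : Mring R n -> Prop) : P 1 ->
  (forall a b : Mring R n, P a -> P b -> P (a + b)) ->
  (forall a b : Mring R n, P b -> P (a ^+ 2 * b)) -> is_qmodule P.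
Proof. by move=> H1 H2 H3; split. Qed.

Lemma mvar_val (R : realType) (n : nat) (b : midx n) : mvar R (val b) = << ucm b >>.
Proof. by rewrite /mvar valK. Qed.

Theorem lemma4p1 (R : realType) (n : nat) (S : polyx R n -> Prop) :
  qm_archimedean (QM S) ->
  qm_archimedean (qm_M S) /\ qm_archimedean (QM_Mx S).
Proof.
move=> HA.
have qmM : is_qmodule (qm_M S) := qgen_qm (qm_generators S).
pose T (p : polyx R n) := forall f : Mpolyx R n, qm_M S (Defs.mmap (f ^+ 2 * emb_x p)).
have HT : is_qmodule T.
  apply: qm_intro_x.
  - by move=> f; apply: qgen_gen; exists 1, f; split; [left|].
  - move=> a b Ha Hb f; rewrite emb_xD mulrDr mmapD'; apply: qmMD; [exact: (Ha f)|exact: (Hb f)].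
  - move=> a b Hb f; rewrite (emb_xM (a ^+ 2) b) (emb_xX2 a) sq_assoc; exact: (Hb (f * emb_x a)).
have QMT : forall p, QM S p -> T p.
  apply: qgen_min HT _ => s Ss f; apply: qgen_gen; exists s, f; by split; [right|].
have Hmv : forall a, bnd (qm_M S) (mvar R a).
  move=> a; have [N [H1 H2]] := HA << a >>; exists N; split.
  - have := QMT _ H1 1; rewrite expr1n mul1r emb_xD emb_x_nat emb_xU mmapD' mmap_nat.
    by rewrite mmapU' mul1r.
  - have := QMT _ H2 1; rewrite expr1n mul1r emb_xB emb_x_nat emb_xU mmapB' mmap_nat.
    by rewrite mmapU' mul1r.
have Hall1 : forall c : Mring R n, bnd (qm_M S) c.
  pose phiM : {rmorphism R -> Mring R n} := malgC.
  move=> c; rewrite (monalgE c); apply: (bnd_sum phiM qmM) => k.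
  rewrite malgU_C; apply: (bnd_mul phiM qmM); first exact: (bnd_phi phiM qmM).
  elim/cm_ind: k => [|i m IH].
    exact: (bnd_nat qmM 1).
  rewrite (@malgUM _ R (ucm i) m).
  apply: (bnd_mul phiM qmM).
  rewrite -mvar_val; exact: Hmv.
  exact: IH.
split; first exact: Hall1.
have qmX := qgen_qm (fun z : Mpolyx R n =>
    (exists s, S s /\ z = emb_x s) \/
    (exists y, qm_generators S y /\ z = emb_M y)).
have embM_in : forall y, qm_M S y -> QM_Mx S (emb_M y).
  apply: qgen_min.
    apply: qm_intro_M.
    - rewrite emb_M1; exact: qmx1.
    - move=> a b Ha Hb; rewrite (emb_MD a b); exact: (qmxD Ha Hb).
    - move=> a b Hb; rewrite (emb_MM (a ^+ 2) b) (emb_MX2 a); exact: (qmxX (emb_M a) Hb).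
  by move=> y Hy; apply: qgen_gen; right; exists y.
have embx_in : forall p, QM S p -> QM_Mx S (emb_x p).
  apply: qgen_min.
    apply: qm_intro_x.
    - rewrite emb_x1; exact: qmx1.
    - move=> a b Ha Hb; rewrite (emb_xD a b); exact: (qmxD Ha Hb).
    - move=> a b Hb; rewrite (emb_xM (a ^+ 2) b) (emb_xX2 a); exact: (qmxX (emb_x a) Hb).
  by move=> s Hs; apply: qgen_gen; left; exists s.
have bX : forall p : polyx R n, bnd (QM_Mx S) (emb_x p).
  move=> p; have [N [H1 H2]] := HA p; exists N; split.
  - by have := embx_in _ H1; rewrite (emb_xD N%:R p) emb_x_nat.
  - by have := embx_in _ H2; rewrite (emb_xB N%:R p) emb_x_nat.
have bM : forall c, bnd (QM_Mx S) (emb_M c).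
  move=> c; have [N [H1 H2]] := Hall1 c; exists N; split.
  - by have := embM_in _ H1; rewrite (emb_MD N%:R c) emb_Mnat.
  - by have := embM_in _ H2; rewrite (emb_MB N%:R c) emb_Mnat.
pose phiX : {rmorphism R -> Mpolyx R n} := fC R n.
move=> q; rewrite (monalgE q); apply: (bnd_sum phiX qmX) => k.
rewrite malgU_C -(emb_xU R k); apply: (bnd_mul phiX qmX); [exact: bM|exact: bX].
Qed.
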